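(* Let $C$ be a linear code of length $n$ over $R$. Then \[ SLWE_{C^\perp}(X_0,X_1,\dots,X_{16})=\frac{1}{|C|}\,SLWE_C(B_0,B_1,\dots,B_{16}), \] where for $0\le k\le 16$, $B_k=\sum_{j=0}^{16}K_j(k)X_j$ and $K_j(k)$ is the coefficient of $Y^j$ in $(1+Y)^{16-k}(1-Y)^k$. (For instance $B_0=\sum_{j}\binom{16}{j}X_j$, $B_8=X_0-8X_2+28X_4-56X_6+70X_8-56X_{10}+28X_{12}-8X_{14}+X_{16}$, $B_{16}=\sum_j(-1)^j\binom{16}{j}X_j$.)
   Context: $R=\mathbb{Z}_4[u,v,w]/\langle u^2-u,v^2-v,w^2-w\rangle$. With $\eta_1=(1-u)(1-v)(1-w)$, $\eta_2=u(1-v)(1-w)$, $\eta_3=(1-u)v(1-w)$, $\eta_4=(1-u)(1-v)w$, $\eta_5=uv(1-w)$, $\eta_6=u(1-v)w$, $\eta_7=(1-u)vw$, $\eta_8=uvw$, every $r\in R$ is uniquely $r=\sum_{i=1}^8 r_i\eta_i$ with $r_i\in\mathbb{Z}_4$ (explicitly, for $r=a+bu+cv+dw+euv+fuw+gvw+huvw$: $r_1=a$, $r_2=a+b$, $r_3=a+c$, $r_4=a+d$, $r_5=a+b+c+e$, $r_6=a+b+d+f$, $r_7=a+c+d+g$, $r_8=a+b+c+d+e+f+g+h$). The Lee weight on $\mathbb{Z}_4$ is $w_L(0)=0$, $w_L(1)=w_L(3)=1$, $w_L(2)=2$, and on $R$ it is $w_L(r)=\sum_{i=1}^8 w_L(r_i)\in\{0,\dots,16\}$.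 A linear code is an $R$-submodule of $R^n$, with dual $C^\perp$ taken w.r.t. $\langle\mathbf{x},\mathbf{y}\rangle=\sum_jx_jy_j$ in $R$. For $\mathbf{c}\in R^n$ and $0\le j\le 16$, $n_j(\mathbf{c})$ is the number of coordinates of $\mathbf{c}$ of Lee weight $j$, and $SLWE_C(X_0,\dots,X_{16})=\sum_{\mathbf{c}\in C}\prod_{j=0}^{16}X_j^{n_j(\mathbf{c})}$. *)

(* Defs.v *)
From HB Require Import structures.
From mathcomp Require Import all_boot all_order all_algebra.
Set Implicit Arguments. Unset Strict Implicit. Unset Printing Implicit Defensive.
Import Order.TTheory GRing.Theory Num.Theory.
Local Open Scope ring_scope.

(* The ring R = Z_4[u,v,w]/<u^2-u, v^2-v, w^2-w>.
   Every element is uniquely a + b u + c v + d w + e uv + f uw + g vw + h uvw,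
   i.e. a Z_4-linear combination of the square-free monomials x^S, S a subset
   of the variables {u,v,w} (indexed 0 = u, 1 = v, 2 = w).  We represent an
   element by its coefficient function S |-> coefficient of x^S.
   Multiplication follows from u^2 = u etc.: x^S * x^T = x^(S :|: T). *)
Definition R := {ffun {set 'I_3} -> 'Z_4}.

Definition rzero : R := [ffun _ => 0].
Definition radd (x y : R) : R := [ffun S => x S + y S].
Definition rmul (x y : R) : R :=
  [ffun U => \sum_(S : {set 'I_3}) \sum_(T : {set 'I_3} | (S :|: T) == U) x S * y T].

(* Component r_P of r in the idempotent basis eta: r = sum_P r_P eta_P, where
   P is the set of variables equal to 1 in the corresponding idempotent
   (eta_1 <-> P = {}, eta_2 <-> {u}, ..., eta_8 <-> {u,v,w}). *)
Definition rcomp (r : R) (P : {set 'I_3}) : 'Z_4 :=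
  \sum_(S : {set 'I_3} | S \subset P) r S.

Definition leeZ4 (x : 'Z_4) : nat :=
  match val x with 0 => 0 | 1 => 1 | 2 => 2 | _ => 1 end%N.

Definition leeR (r : R) : nat := (\sum_(P : {set 'I_3}) leeZ4 (rcomp r P))%N.

Definition word (n : nat) := {ffun 'I_n -> R}.

Definition wzero (n : nat) : word n := [ffun _ => rzero].
Definition wadd (n : nat) (x y : word n) : word n := [ffun j => radd (x j) (y j)].
Definition wscale (n : nat) (r : R) (x : word n) : word n := [ffun j => rmul r (x j)].

Definition linear_code (n : nat) (C : {set word n}) : Prop :=
  [/\ wzero n \in C,
      (forall x y, x \in C -> y \in C -> wadd x y \in C) &
      (forall r x, x \in C -> wscale r x \in C)].

Definition ip (n : nat) (x y : word n) : R :=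
  \big[radd/rzero]_(j < n) rmul (x j) (y j).

Definition dual (n : nat) (C : {set word n}) : {set word n} :=
  [set y : word n | [forall x in C, ip x y == rzero]].

Definition nj (n : nat) (c : word n) (j : nat) : nat :=
  #|[set i : 'I_n | leeR (c i) == j]|.

Definition SLWE (F : fieldType) (n : nat) (C : {set word n}) (X : 'I_17 -> F) : F :=
  \sum_(c in C) \prod_(j < 17) X j ^+ nj c j.

Definition Kraw (j k : nat) : int :=
  (((1 + 'X) ^+ (16 - k) * (1 - 'X) ^+ k : {poly int})`_j).

Definition Bk (F : fieldType) (X : 'I_17 -> F) (k : 'I_17) : F :=
  \sum_(j < 17) (Kraw j k)%:~R * X j.

(* Main.v *)
Require Import Defs.
From HB Require Import structures.
From mathcomp Require Import all_boot all_order all_algebra all_field.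
From mathcomp Require Import ring.
Import Order.TTheory GRing.Theory Num.Theory.
Local Open Scope ring_scope.

Lemma rcompD x y P : rcomp (radd x y) P = rcomp x P + rcomp y P.
Proof. by rewrite /rcomp -big_split; apply: eq_bigr => S _; rewrite ffunE. Qed.

Lemma rcomp0 P : rcomp rzero P = 0.
Proof. by rewrite /rcomp big1 // => S _; rewrite ffunE. Qed.

Lemma rcompM x y P : rcomp (rmul x y) P = rcomp x P * rcomp y P.
Proof.
rewrite /rcomp big_distrlr /=.
under eq_bigr => U _ do rewrite ffunE.
rewrite exchange_big /=.
rewrite [LHS](bigID (fun S : {set 'I_3} => S \subset P)) /= [X in _ + X]big1 ?addr0; last first.
  move=> S nSP; rewrite big1 // => U UP; rewrite big1 // => T /eqP hU.
  by move: UP; rewrite -hU subUset (negbTE nSP).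
apply: eq_bigr => S SP.
rewrite (exchange_big_dep predT) //=.
rewrite [LHS](bigID (fun T : {set 'I_3} => T \subset P)) /= [X in _ + X]big1 ?addr0; last first.
  move=> T nTP; rewrite big1 // => U /andP [UP /eqP hU].
  by move: UP; rewrite -hU subUset (negbTE nTP) andbF.
apply: eq_bigr => T TP.
rewrite (big_pred1 (S :|: T)) // => U /=.
rewrite eq_sym; case: eqP => [->|]; by rewrite ?andbF ?subUset ?SP ?TP.
Qed.

Lemma rcomp_big n (F : 'I_n -> R) P :
  rcomp (\big[radd/rzero]_(j < n) F j) P = \sum_(j < n) rcomp (F j) P.
Proof.
by apply: (big_morph (fun r => rcomp r P)) => [x y|]; rewrite ?rcompD ?rcomp0.
Qed.

Definition phi (r : R) : R := [ffun P => rcomp r P].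

Lemma rcomp_split r S : rcomp r S = r S + \sum_(T : {set 'I_3} | T \proper S) r T.
Proof.
rewrite /rcomp (bigD1 S) //=; congr (_ + _); apply: eq_bigl => T.
by rewrite properEneq andbC.
Qed.

Lemma phi_inj : injective phi.
Proof.
move=> r r' h.
have e P : rcomp r P = rcomp r' P by have := congr1 (fun f : R => f P) h; rewrite !ffunE.
suff H m : forall S : {set 'I_3}, (#|S| <= m)%N -> r S = r' S.
  by apply/ffunP => S; apply: (H #|S|).
elim: m => [|m IH] S hS.
  have S0 : S = set0 by apply/cards0_eq; move: hS; rewrite leqn0 => /eqP.
  have := e S; rewrite !rcomp_split; rewrite !big1 ?addr0 // => T.
  - by rewrite S0 => /proper_card; rewrite cards0.
  - by rewrite S0 => /proper_card; rewrite cards0.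
have := e S; rewrite !rcomp_split.
rewrite (eq_bigr (fun T => r' T)); first by move/addIr.
move=> T /proper_card TS; apply: IH; rewrite -ltnS; exact: leq_trans TS hS.
Qed.

Lemma phi_surj (v : R) : exists r, phi r = v.
Proof.
have := injF_onto phi_inj v; case/codomP => r ->; by exists r.
Qed.

Lemma leeZ4_le2 (t : 'Z_4) : (leeZ4 t <= 2)%N.
Proof. by rewrite /leeZ4; case: t => [[|[|[|[|m]]]] ?]. Qed.

Lemma card_sets3 : #|{set 'I_3}| = 8%N.
Proof. by rewrite -cardsT -powersetT card_powerset cardsT card_ord. Qed.

Lemma leeR_le16 r : (leeR r <= 16)%N.
Proof.
rewrite /leeR; apply: (@leq_trans (\sum_(P : {set 'I_3}) 2)%N).
  by apply: leq_sum => P _; apply: leeZ4_le2.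
by rewrite sum_nat_const card_sets3.
Qed.

Definition chi (a : 'Z_4) : algC := 'i ^+ (val a).

Lemma i4 : ('i : algC) ^+ 4 = 1.
Proof. by rewrite (exprM _ 2 2) sqrCi sqrrN expr1n. Qed.

Lemma iexp_mod m : ('i : algC) ^+ (m %% 4) = 'i ^+ m.
Proof. by rewrite {2}(divn_eq m 4) exprD mulnC exprM i4 expr1n mul1r. Qed.

Lemma chiD a b : chi (a + b) = chi a * chi b.
Proof. by rewrite /chi -exprD -[in RHS]iexp_mod. Qed.

Lemma chi0 : chi 0 = 1.
Proof. by []. Qed.

Lemma chi_sum I (r : seq I) (F : I -> 'Z_4) :
  chi (\sum_(i <- r) F i) = \prod_(i <- r) chi (F i).
Proof. by apply: (big_morph chi chiD chi0). Qed.

Lemma i_neq1 : ('i : algC) != 1.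
Proof.
apply/eqP => h; have := @sqrCi algC; rewrite h expr1n => /eqP.
by rewrite -subr_eq0 opprK -mulr2n pnatr_eq0.
Qed.

Lemma chi_neq1 a : a != 0 -> chi a != 1.
Proof.
rewrite /chi; case: a => [[|[|[|[|m]]]] hm] //= _.
- by rewrite expr1 i_neq1.
- rewrite sqrCi; apply/eqP => /eqP; rewrite -subr_eq0 -opprD oppr_eq0.
  by rewrite -mulr2n pnatr_eq0.
- apply/eqP => h; move: i_neq1.
  suff -> : ('i : algC) = 1 by rewrite eqxx.
  by rewrite -[LHS]mulr1 -h -exprS i4.
Qed.

Definition tr (r : R) : 'Z_4 := \sum_(P : {set 'I_3}) rcomp r P.

Lemma rcomp_ip_wadd n (x x1 y : word n) P :
  rcomp (ip (wadd x x1) y) P = rcomp (ip x y) P + rcomp (ip x1 y) P.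
Proof.
rewrite /ip !rcomp_big -big_split; apply: eq_bigr => j _.
by rewrite !rcompM ffunE rcompD mulrDl.
Qed.

Lemma rcomp_ip_wscale n s (x y : word n) P :
  rcomp (ip (wscale s x) y) P = rcomp s P * rcomp (ip x y) P.
Proof.
rewrite /ip !rcomp_big mulr_sumr; apply: eq_bigr => j _.
by rewrite !rcompM ffunE rcompM mulrA.
Qed.

Lemma tr_ip_wadd n (x x1 y : word n) :
  tr (ip (wadd x x1) y) = tr (ip x y) + tr (ip x1 y).
Proof. by rewrite /tr -big_split; apply: eq_bigr => P _; rewrite rcomp_ip_wadd. Qed.

Lemma orth n (C : {set word n}) (HC : linear_code C) (y : word n) :
  \sum_(x in C) chi (tr (ip x y)) = if y \in dual C then #|C|%:R else 0.
Proof.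
case: HC => C0 Cadd Cscale.
case: ifP => yD.
  rewrite -sumr_const; apply: eq_bigr => x xC.
  move: yD; rewrite inE => /forallP /(_ x); rewrite xC /= => /eqP ->.
  by rewrite /tr big1 // => P _; rewrite rcomp0.
have [x0 x0C ipn0] : exists2 x0, x0 \in C & ip x0 y != rzero.
  move/negbT: yD; rewrite inE => /forallPn [x0]; rewrite negb_imply => /andP [x0C h].
  by exists x0.
have [P hP] : exists P, rcomp (ip x0 y) P != 0.
  apply/existsP; apply: contraR ipn0 => /existsPn h; apply/eqP/phi_inj.
  apply/ffunP => P; rewrite !ffunE rcomp0; exact/eqP/negPn/h.
have [s hs] := phi_surj [ffun Q => (Q == P)%:R].
set x1 := wscale s x0.
have x1C : x1 \in C by apply: Cscale.
have trx1 : tr (ip x1 y) = rcomp (ip x0 y) P.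
  rewrite /tr (bigD1 P) //= big1 ?addr0.
    rewrite rcomp_ip_wscale.
    have := congr1 (fun f : R => f P) hs; rewrite !ffunE eqxx => ->.
    by rewrite mul1r.
  move=> Q QP; rewrite rcomp_ip_wscale.
  have := congr1 (fun f : R => f Q) hs; rewrite !ffunE (negbTE QP) => ->.
  by rewrite mul0r.
set S := \sum_(x in C) _.
have hS : S = chi (tr (ip x1 y)) * S.
  have himg : [set wadd x x1 | x in C] = C.
    apply/eqP; rewrite eqEcard card_imset; last first.
      move=> a b /ffunP h; apply/ffunP => j; have := h j; rewrite !ffunE.
      move/ffunP => h2; apply/ffunP => U; have := h2 U; rewrite !ffunE.
      by move/addIr.
    rewrite leqnn andbT; apply/subsetP => z /imsetP [x xC ->]; exact: Cadd.
  rewrite {1}/S -{1}himg big_imset /=; last first.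
    move=> a b _ _ /ffunP h; apply/ffunP => j; have := h j; rewrite !ffunE.
    move/ffunP => h2; apply/ffunP => U; have := h2 U; rewrite !ffunE.
    by move/addIr.
  rewrite /S mulr_sumr; apply: eq_bigr => x _.
  by rewrite tr_ip_wadd chiD mulrC.
apply/eqP; move/eqP: hS; rewrite -subr_eq0 -{1}[S]mul1r -mulrBl mulf_eq0.
rewrite subr_eq0 eq_sym trx1 (negbTE (chi_neq1 _ hP)) /=; done.
Qed.
Lemma i3 : ('i : algC) ^+ 3 = - 'i.
Proof. by rewrite exprS sqrCi mulrN1. Qed.

Lemma iexp_mod' m : ('i : algC) ^+ (m %% (Zp_trunc 4).+2) = 'i ^+ m.
Proof. exact: iexp_mod. Qed.

Lemma kraw1 (b : 'Z_4) :
  \sum_(t : 'Z_4) (chi (b * t))%:P * 'X^(leeZ4 t) =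
  (1 + 'X) ^+ (2 - leeZ4 b) * (1 - 'X : {poly algC}) ^+ (leeZ4 b).
Proof.
case: b => [[|[|[|[|m]]]] hb] //;
rewrite !big_ord_recl big_ord0 /chi /leeZ4 /=;
rewrite !iexp_mod' /bump /=; rewrite ?(mul0n, muln0, mul1n, muln1, addn0, add0n) /=;
rewrite -?(iexp_mod (_ + _)) -?(iexp_mod (_ * _)) /=;
rewrite ?expr0 ?expr1 ?sqrCi ?i3 ?polyCN ?polyC1 ?expr0 ?subn0 ?subnn; ring.
Qed.


Lemma krawR (b : R) :
  \sum_(a : R) (chi (\sum_(P : {set 'I_3}) rcomp b P * rcomp a P))%:P * 'X^(leeR a) =
  (1 + 'X) ^+ (16 - leeR b) * (1 - 'X : {poly algC}) ^+ (leeR b).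
Proof.
pose F (v : R) : {poly algC} :=
  \prod_(P : {set 'I_3}) ((chi (rcomp b P * v P))%:P * 'X^(leeZ4 (v P))).
have -> : \sum_(a : R) (chi (\sum_(P : {set 'I_3}) rcomp b P * rcomp a P))%:P * 'X^(leeR a)
    = \sum_(a : R) F (phi a).
  apply: eq_bigr => a _; rewrite /F big_split /= -rmorph_prod -chi_sum prodrXr.
  rewrite /leeR; congr (_%:P * 'X^_); [congr chi|]; by apply: eq_bigr => P _; rewrite ffunE.
rewrite -(@reindex_inj _ _ _ _ phi xpredT F phi_inj) /F.
rewrite -(bigA_distr_bigA (fun (P : {set 'I_3}) (t : 'Z_4) =>
            (chi (rcomp b P * t))%:P * 'X^(leeZ4 t))) /=.
under eq_bigr => P _ do rewrite kraw1.
rewrite big_split /= !prodrXr; congr (_ ^+ _ * _ ^+ _).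
apply/eqP; rewrite -(eqn_add2r (leeR b)) subnK ?leeR_le16 // /leeR -big_split /=.
rewrite (eq_bigr (fun _ => 2%N)) ?sum_nat_const ?card_sets3 // => P _.
by rewrite subnK // leeZ4_le2.
Qed.

Lemma krawC (b : R) (j : nat) :
  \sum_(a : R) chi (\sum_(P : {set 'I_3}) rcomp b P * rcomp a P) * (leeR a == j)%:R
  = (Kraw j (leeR b))%:~R.
Proof.
transitivity ((\sum_(a : R) (chi (\sum_(P : {set 'I_3}) rcomp b P * rcomp a P))%:P
   * 'X^(leeR a))`_j).
  by rewrite coef_sum; apply: eq_bigr => a _; rewrite coefCM coefXn eq_sym.
rewrite krawR.
rewrite /Kraw -coef_map /=.
congr (_ `_ j).
by rewrite rmorphM !rmorphXn /= rmorphD rmorphB /= rmorph1 map_polyX.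
Qed.

Lemma prod_ind n (b : 'I_n -> bool) :
  \prod_(i < n) ((b i)%:R : algC) = ([forall i, b i])%:R.
Proof.
case: (boolP [forall i, b i]) => [/forallP h|/forallPn [i hi]].
  by rewrite big1 // => i _; rewrite h.
by rewrite (bigD1 i) //= (negbTE hi) mul0r.
Qed.

Lemma key n (C : {set word n}) (HC : linear_code C) (g : 'I_n -> nat) :
  (\sum_(x in C) \prod_(i < n) (Kraw (g i) (leeR (x i)))%:~R : algC)
  = (#|C| * #|[set y in dual C | [forall i, leeR (y i) == g i]]|)%:R.
Proof.
under eq_bigr => x _ do under eq_bigr => i _ do rewrite -krawC.
under eq_bigr => x _ do rewrite bigA_distr_bigA /=.
rewrite exchange_big /=.
transitivity (\sum_(y : word n)
   ((y \in [set y in dual C | [forall i, leeR (y i) == g i]])%:R * #|C|%:R : algC)).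
  apply: eq_bigr => y _.
  under eq_bigr => x _ do rewrite big_split /= prod_ind -chi_sum.
  rewrite -mulr_suml.
  have -> : \sum_(x in C) chi (\sum_(i < n) \sum_(P : {set 'I_3}) rcomp (x i) P * rcomp (y i) P)
     = \sum_(x in C) chi (tr (ip x y)).
    apply: eq_bigr => x _; congr chi; rewrite /tr exchange_big /=.
    by apply: eq_bigr => P _; rewrite /ip rcomp_big; apply: eq_bigr => i _; rewrite rcompM.
  rewrite orth // [in RHS]inE.
  by case: (y \in dual C); case: [forall i, _]; rewrite /= ?mulr0 ?mul0r ?mul1r ?mulr1.
set S := [set y in dual C | _].
rewrite -mulr_suml natrM mulrC; congr (_ * _).
have -> : \sum_(y : word n) ((y \in S)%:R : algC) = \sum_(y in S) (1 : algC).
  by rewrite [RHS]big_mkcond; apply: eq_bigr => y _; case: (y \in S).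
by rewrite sumr_const.
Qed.

Lemma keyZ n (C : {set word n}) (HC : linear_code C) (g : 'I_n -> nat) :
  (\sum_(x in C) \prod_(i < n) Kraw (g i) (leeR (x i)) : int)
  = (#|C| * #|[set y in dual C | [forall i, leeR (y i) == g i]]|)%:Z.
Proof.
apply: (@intr_inj algC); rewrite rmorph_sum.
under eq_bigr => x _ do rewrite rmorph_prod.
by rewrite key.
Qed.

Definition wt (r : R) : 'I_17 := inord (leeR r).

Lemma wtE r : (wt r : nat) = leeR r.
Proof. by rewrite inordK // ltnS leeR_le16. Qed.

Lemma nj_prod (F : fieldType) (Y : 'I_17 -> F) n (c : word n) :
  \prod_(j < 17) Y j ^+ nj c j = \prod_(i < n) Y (wt (c i)).
Proof.
rewrite (partition_big (fun i => wt (c i)) xpredT) //=.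
apply: eq_bigr => j _.
rewrite (eq_bigr (fun _ => Y j)); last by move=> i /eqP ->.
rewrite prodr_const /nj; congr (_ ^+ _); apply: eq_card => i.
by rewrite !inE -topredE /= wtE.
Qed.

Theorem mainTheorem5 (n : nat) (C : {set word n}) (HC : linear_code C)
  (F : numFieldType) (X : 'I_17 -> F) :
  SLWE (dual C) X = (#|C|%:R)^-1 * SLWE C (Bk X).
Proof.
have C0 : (#|C|%:R : F) != 0.
  by rewrite pnatr_eq0 -lt0n; apply/card_gt0P; exists (wzero n); case: HC.
suff -> : SLWE C (Bk X) = #|C|%:R * SLWE (dual C) X by rewrite mulKf.
pose D := dual C.
pose P (g : {ffun 'I_n -> 'I_17}) (y : word n) := [forall i, leeR (y i) == g i].
rewrite /SLWE.
under eq_bigr => x _ do rewrite nj_prod.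
transitivity (\sum_(g : {ffun 'I_n -> 'I_17})
   (#|C| * #|[set y in D | P g y]|)%:R * \prod_(i < n) X (g i)).
  under eq_bigr => x _.
    under eq_bigr => i _ do rewrite /Bk wtE.
    rewrite bigA_distr_bigA /=.
  over.
  rewrite exchange_big /=; apply: eq_bigr => g _.
  under eq_bigr => x _ do rewrite big_split /=.
  rewrite -mulr_suml; congr (_ * _).
  have := keyZ _ _ HC (fun i => g i) => /(congr1 (fun z : int => (z%:~R : F))).
  rewrite rmorph_sum /= -pmulrn => h; rewrite /D /P -h.
  by apply: eq_bigr => x _; rewrite rmorph_prod.
under eq_bigr => g _ do rewrite natrM -mulrA.
rewrite -mulr_sumr; congr (_ * _).
transitivity (\sum_(g : {ffun 'I_n -> 'I_17}) \sum_(y in D | P g y) \prod_(i < n) X (g i)).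
  apply: eq_bigr => g _; rewrite mulr_natl -sumr_const.
  by apply: eq_bigl => y; rewrite inE.
rewrite (exchange_big_dep (mem D)) /=; last by move=> g y _ /andP [].
under [RHS]eq_bigr => y _ do rewrite nj_prod.
apply: eq_bigr => y yD.
rewrite (big_pred1 [ffun i => wt (y i)]); first by apply: eq_bigr => i _; rewrite ffunE.
move=> g /=; rewrite yD /= /P.
apply/forallP/eqP => [h|->] ; last by move=> i; rewrite ffunE wtE.
by apply/ffunP => i; rewrite ffunE; apply: val_inj; rewrite /= wtE; apply/esym/eqP; exact: h.
Qed.
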